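(* Let $B_1$ and $B_2$ be bouquets whose signed intersection graphs $SI(B_1)$ and $SI(B_2)$ are isomorphic (via a graph isomorphism preserving signs). Then $P_\bullet(B_1,x)=P_\bullet(B_2,x)$ for every $\bullet\in\{\langle\delta\rangle,\langle\delta\tau\rangle,\langle\tau\delta\tau\rangle,\langle\delta,\tau\rangle\}$.
   Context: A ribbon graph $G=(V(G),E(G))$ is a (orientable or non-orientable) surface with boundary, represented as the union of a set $V(G)$ of vertex discs and a set $E(G)$ of edge discs (ribbons) such that vertices and edges intersect in disjoint line segments, each such segment lies on the boundary of exactly one vertex and exactly one edge, and every edge contains exactly two such segments. $v(G)$ denotes the number of vertices. A bouquet is a ribbon graph with exactly one vertex. A loop is non-orientable if the ribbon together with its vertex forms a Möbius band, and orientable otherwise. Two loops of a bouquet are interlaced if their ends alternate in the cyclic order around the vertex boundary. The intersection graph $I(B)$ of a bouquet $B$ has vertex set $E(B)$, two vertices adjacent iff the loops are interlaced; the signed intersection graph $SI(B)$ is $I(B)$ with each vertex signed $+$ if the loop is orientable and $-$ if non-orientable. For $A\subseteq E(G)$, the partial dual $G^{\delta(A)}$ is obtained by gluing a disc along each boundary component of the spanning ribbon subgraph $(V(G),A)$ (these discs become the vertex discs), removing the interiors of the original vertex discs, and keeping the edge ribbons. The partial Petrial $G^{\tau(A)}$ adds a half-twist to each edge in $A$. For a word $w=w_1\cdots w_n$ over $\{\delta,\tau\}$, $G^{w(A)}=(\cdots(G^{w_n(A)})^{w_{n-1}(A)}\cdots)^{w_1(A)}$ (rightmost letter applied first), $G^{1(A)}=G$,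 and $G^{\xi(A)\pi(B)}=(G^{\xi(A)})^{\pi(B)}$. Vertex polynomials (sums over ordered partitions of $E(G)$ into pairwise disjoint, possibly empty parts): $P_{\langle\delta\rangle}(G,x)=\sum_{A\subseteq E(G)}x^{v(G^{\delta(A)})}$; $P_{\langle\tau\delta\tau\rangle}(G,x)=\sum_{A\subseteq E(G)}x^{v(G^{\tau\delta\tau(A)})}$; $P_{\langle\delta\tau\rangle}(G,x)=\sum_{(A_1,A_2,A_3)}x^{v(G^{1(A_1)\tau\delta(A_2)\delta\tau(A_3)})}$; $P_{\langle\delta,\tau\rangle}(G,x)=\sum_{(A_1,\dots,A_6)}x^{v(G^{1(A_1)\delta(A_2)\tau(A_3)\tau\delta(A_4)\delta\tau(A_5)\tau\delta\tau(A_6)})}$. *)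

(* Defs.v *)
From HB Require Import structures.
From mathcomp Require Import all_boot all_order all_algebra.
Set Implicit Arguments. Unset Strict Implicit. Unset Printing Implicit Defensive.
Import GRing.Theory.

(* ---------- General ribbon graphs as gems on a fixed flag set ----------
   A ribbon graph is encoded by its flags F (the 4 corners of each edge
   ribbon where it meets a vertex disc) with three involutions:
     t0 : along a side of an edge ribbon (to the other end of the edge),
     t1 : along a vertex-boundary arc between consecutive edge ends,
     t2 : across an edge-end segment (same vertex, same edge).
   Vertices = orbits of <t1,t2>, edges = orbits of <t0,t2>,
   boundary components = orbits of <t0,t1>.  Partial duality and partial
   Petriality leave the flag set and the edge map unchanged. *)

Inductive rop := OpD | OpT .

Definition gem (F : finType) := ((F -> F) * (F -> F) * (F -> F))%type.

Section Gem.
Variables (F E : finType) (edge_of : F -> E).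

Definition g0 (g : gem F) := g.1.1.
Definition g1 (g : gem F) := g.1.2.
Definition g2 (g : gem F) := g.2.

Definition pdual (A : {set E}) (g : gem F) : gem F :=
  ((fun x => if edge_of x \in A then g2 g x else g0 g x), g1 g,
   (fun x => if edge_of x \in A then g0 g x else g2 g x)).

(* partial Petrial G^{tau(A)}: half-twist on each edge of A *)
Definition ppetrial (A : {set E}) (g : gem F) : gem F :=
  ((fun x => if edge_of x \in A then g0 g (g2 g x) else g0 g x), g1 g, g2 g).

Definition app_op (o : rop) (A : {set E}) (g : gem F) : gem F :=
  match o with OpD => pdual A g | OpT => ppetrial A g end.

(* G^{w(A)} for w = w_1 ... w_n : w_n is applied first *)
Definition app_word (w : seq rop) (A : {set E}) (g : gem F) : gem F :=
  foldr (fun o h => app_op o A h) g w.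

(* G^{xi_1(A_1) xi_2(A_2) ...} = ((G^{xi_1(A_1)})^{xi_2(A_2)}) ... *)
Definition app_seq (l : seq (seq rop * {set E})) (g : gem F) : gem F :=
  foldl (fun h p => app_word p.1 p.2 h) g l.

(* vertices with at least one incident edge = orbits of <t1,t2> *)
Definition vrel (g : gem F) : rel F := [rel x y | (y == g1 g x) || (y == g2 g x)].
Definition gem_orbits (g : gem F) : nat :=
  #|[set [set y | connect (vrel g) x y] | x : F]|.
End Gem.

(* ---------- Bouquets ----------
   A bouquet with m loops 'I_m: reading the boundary of its (oriented) vertex
   disc, the 2m edge-end segments at positions 'I_(2m) carry the loops bw i;
   each loop occurs exactly twice.  bor e = true iff the ribbon of e is
   untwisted relative to the vertex orientation, i.e. e together with the
   vertex is an annulus (orientable loop); false = Moebius band. *)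
Record bouquet := Bouquet {
  bm : nat;
  bw : 'I_(bm.*2) -> 'I_bm;
  bor : 'I_bm -> bool;
  bwP : forall e, #|[set i | bw i == e]| = 2 }.

Section BouquetDefs.
Variable B : bouquet.

Definition bflag := ('I_(bm B).*2 * bool)%type.
(* flag (i, false) = start of segment i, (i, true) = its end (w.r.t. the
   vertex orientation) *)

Definition bedge (x : bflag) : 'I_(bm B) := bw x.1.

Definition other_end (i : 'I_(bm B).*2) : 'I_(bm B).*2 :=
  odflt i [pick j | (j != i) && (bw j == bw i)].

Definition bt0 (x : bflag) : bflag :=
  (other_end x.1, if bor (bw x.1) then ~~ x.2 else x.2).
Definition bt1 (x : bflag) : bflag :=
  if x.2 then (ordS x.1, false) else (ord_pred x.1, true).
Definition bt2 (x : bflag) : bflag := (x.1, ~~ x.2).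

Definition bgem : gem bflag := (bt0, bt1, bt2).

(* number of vertices of a ribbon graph obtained from B by partial duals /
   Petrials (encoded by g); a bouquet without edges is one isolated vertex,
   which all these operations preserve *)
Definition nverts (g : gem bflag) : nat :=
  if bm B == 0 then 1 else gem_orbits g.

Definition loop_orientable (e : 'I_(bm B)) : bool := bor e.

Definition interlaced (e f : 'I_(bm B)) : bool :=
  (e != f) &&
  [exists i : 'I_(bm B).*2, exists j : 'I_(bm B).*2,
   exists k : 'I_(bm B).*2, exists l : 'I_(bm B).*2,
     [&& i < j, j < k, k < l &
       [&& bw i == e, bw j == f, bw k == e & bw l == f]
    || [&& bw i == f, bw j == e, bw k == f & bw l == e]]].

Definition part (n : nat) (f : {ffun 'I_(bm B) -> 'I_n}) (k : nat)
  : {set 'I_(bm B)} := [set e | nat_of_ord (f e) == k].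

Local Open Scope ring_scope.

Definition P_d : {poly int} :=
  \sum_(A : {set 'I_(bm B)})
     'X^(nverts (app_word bedge [:: OpD] A bgem)).

Definition P_tdt : {poly int} :=
  \sum_(A : {set 'I_(bm B)})
     'X^(nverts (app_word bedge [:: OpT; OpD; OpT] A bgem)).

Definition P_dt : {poly int} :=
  \sum_(f : {ffun 'I_(bm B) -> 'I_3})
     'X^(nverts (app_seq bedge
        [:: ([::], part f 0); ([:: OpT; OpD], part f 1);
            ([:: OpD; OpT], part f 2)] bgem)).

Definition P_d_t : {poly int} :=
  \sum_(f : {ffun 'I_(bm B) -> 'I_6})
     'X^(nverts (app_seq bedge
        [:: ([::], part f 0); ([:: OpD], part f 1); ([:: OpT], part f 2);
            ([:: OpT; OpD], part f 3); ([:: OpD; OpT], part f 4);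
            ([:: OpT; OpD; OpT], part f 5)] bgem)).
End BouquetDefs.

Definition SI_isomorphic (B1 B2 : bouquet) : Prop :=
  exists phi : 'I_(bm B1) -> 'I_(bm B2),
    [/\ bijective phi,
        forall e, loop_orientable (phi e) = loop_orientable e &
        forall e f, interlaced (phi e) (phi f) = interlaced e f].

(* Main.v *)
Require Import Defs.
From mathcomp Require Import all_boot all_order all_algebra zify.
Set Implicit Arguments. Unset Strict Implicit. Unset Printing Implicit Defensive.

Section Basic.
Variable B : bouquet.
Local Notation m := (bm B).
Local Notation n := (bm B).*2.
Local Notation pos := 'I_n.

Lemma bw_set (i : pos) : [set j | bw j == bw i] = [set i; other_end i] /\ other_end i != i.
Proof.
have /cards2P [a [b [ab Hs]]] : #|[set j | bw j == bw i]| == 2 by rewrite bwP.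
have iin : i \in [set a; b] by rewrite -Hs inE.
have Hoe : other_end i != i /\ bw (other_end i) = bw i.
  rewrite /other_end; case: pickP => [j /andP[H1 /eqP H2]|H] //=.
  exfalso.
  have [c [ci cin]] : exists c, c != i /\ c \in [set a; b].
    move: iin; rewrite !inE => /orP[/eqP->|/eqP->].
      by exists b; rewrite eq_sym ab !inE eqxx orbT.
    by exists a; rewrite ab !inE eqxx.
  move: cin; rewrite -Hs inE => cb.
  by move: (H c); rewrite ci cb.
case: Hoe => Hne Hbw; split => //.
apply/eqP; rewrite eq_sym eqEcard; apply/andP; split.
  apply/subsetP => j; rewrite !inE => /orP[/eqP->|/eqP->]; first by [].
  by rewrite Hbw.
by rewrite Hs !cards2 ab eq_sym Hne.
Qed.

Lemma oe_neq (i : pos) : other_end i != i.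
Proof. by case: (bw_set i). Qed.

Lemma bw_eq (i j : pos) : (bw j == bw i) = (j == i) || (j == other_end i).
Proof. by case: (bw_set i) => H _; rewrite -in_set2 -H inE. Qed.

Lemma oe_bw (i : pos) : bw (other_end i) = bw i.
Proof. by apply/eqP; rewrite bw_eq eqxx orbT. Qed.

Lemma oeK (i : pos) : other_end (other_end i) = i.
Proof.
have := bw_eq (other_end i) i; rewrite oe_bw eqxx eq_sym (negbTE (oe_neq i)) /=.
by move/esym/eqP.
Qed.

Lemma pos_exists (e : 'I_m) : exists i : pos, bw i = e.
Proof.
have : #|[set j | bw j == e]| = 2 by apply: bwP.
case: (pickP [pred j | bw j == e]) => [j /eqP Hj _|H]; first by exists j.
have -> : [set j | bw j == e] = set0 by apply/setP => j; rewrite !inE; have := H j.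
by rewrite cards0.
Qed.

Definition kap (u v : bool) (x : bflag B) : bflag B :=
  (if u then other_end x.1 else x.1, x.2 (+) v (+) (u && bor (bw x.1))).
Definition kapp (p : bool * bool) := kap p.1 p.2.

Lemma kap_bw u v x : bw (kap u v x).1 = bw x.1.
Proof. by case: u; rewrite /= ?oe_bw. Qed.

Lemma kapK u v u' v' x : kap u v (kap u' v' x) = kap (u (+) u') (v (+) v') x.
Proof.
case: x => i b; rewrite /kap /=.
case: u'; case: u; rewrite /= ?oeK ?oe_bw; congr (_, _);
  by case: b; case: v; case: v'; case: (bor (bw i)).
Qed.

Lemma kap00 x : kap false false x = x.
Proof. by case: x => i b; rewrite /kap /= !addbF. Qed.

Lemma bt0E (x : bflag B) : bt0 x = kap true false x.
Proof. by case: x => i b; rewrite /bt0 /kap /=; case: (bor _); case: b. Qed.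

Lemma bt2E (x : bflag B) : bt2 x = kap false true x.
Proof. by case: x => i b; rewrite /bt2 /kap /= addbT addbF. Qed.

Lemma bt1K (x : bflag B) : bt1 (bt1 x) = x.
Proof. by case: x => i [] /=; rewrite /bt1 /= ?ordSK ?ord_predK. Qed.

End Basic.


Definition st := ((bool * bool) * (bool * bool))%type.
Definition xorp (p q : bool * bool) := (p.1 (+) q.1, p.2 (+) q.2).
Definition st_op (o : rop) (inA : bool) (s : st) : st :=
  if inA then match o with OpD => (s.2, s.1) | OpT => (xorp s.1 s.2, s.2) end else s.
Definition st_word (w : seq rop) (inA : bool) (s : st) : st :=
  foldr (fun o t => st_op o inA t) s w.
Definition st_seq (l : seq (seq rop * bool)) (s : st) : st :=
  foldl (fun t p => st_word p.1 p.2 t) s l.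
Definition st_init : st := ((true, false), (false, true)).
Definition goodst (s : st) :=
  [&& s.1 != (false, false), s.2 != (false, false) & s.1 != s.2].

Lemma good_op o b s : goodst s -> goodst (st_op o b s).
Proof. by case: s => [[[] []] [[] []]]; case: o; case: b. Qed.
Lemma good_word w b s : goodst s -> goodst (st_word w b s).
Proof. by elim: w => //= o w IH /IH; apply: good_op. Qed.
Lemma good_seq l s : goodst s -> goodst (st_seq l s).
Proof. by elim: l s => //= p l IH s /(good_word p.1 p.2) /IH. Qed.

Section Rep.
Variable B : bouquet.
Local Notation m := (bm B).

Definition rep (g : gem (bflag B)) (S : 'I_m -> st) :=
  forall x : bflag B, [/\ g0 g x = kapp (S (bw x.1)).1 x, g1 g x = bt1 x &
                         g2 g x = kapp (S (bw x.1)).2 x].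

Lemma rep_init : rep (bgem B) (fun _ => st_init).
Proof. by move=> x; split; rewrite /g0 /g1 /g2 /= ?bt0E ?bt2E. Qed.

Lemma rep_op g S o A : rep g S ->
  rep (app_op (@bedge B) o A g) (fun e => st_op o (e \in A) (S e)).
Proof.
move=> H x; have [H0 H1 H2] := H x.
move: H0 H1 H2; rewrite /g0 /g1 /g2 => H0 H1 H2.
case: o; rewrite /app_op /pdual /ppetrial /g0 /g1 /g2 /= /bedge; split => //=.
- by rewrite H0 H2; case: (bw x.1 \in A).
- by rewrite H0 H2; case: (bw x.1 \in A).
- rewrite H0; case: (bw x.1 \in A) => //=.
  rewrite H2; have [+ _ _] := H (kapp (S (bw x.1)).2 x).
  rewrite /g0 => ->.
  by rewrite /kapp kap_bw kapK.
- by rewrite H2; case: (bw x.1 \in A).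
Qed.

Lemma rep_word g S w A : rep g S ->
  rep (app_word (@bedge B) w A g) (fun e => st_word w (e \in A) (S e)).
Proof.
elim: w => //= o w IH /IH H.
exact: (rep_op o A H).
Qed.

Lemma rep_seq g S l : rep g S ->
  rep (app_seq (@bedge B) l g)
      (fun e => st_seq [seq (p.1, e \in p.2) | p : seq rop * {set 'I_m} <- l] (S e)).
Proof.
elim: l g S => //= p l IH g S H.
exact: (IH _ _ (rep_word p.1 p.2 H)).
Qed.
End Rep.


Section CardClosed.
Variables (T : finType) (e : rel T).
Hypothesis esym : connect_sym e.

Definition clos (Z : {set T}) := [forall x, forall y, e x y ==> ((x \in Z) == (y \in Z))].
Let cl x := [set y | connect e x y].
Let cls := [set cl x | x : T].

Lemma cl_eq x y : connect e x y -> cl x = cl y.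
Proof.
move=> cxy; apply/setP => z; rewrite !inE; apply/idP/idP => H.
  by apply: connect_trans H; rewrite esym.
exact: connect_trans cxy H.
Qed.

Lemma clos_connect Z : clos Z -> forall x y, connect e x y -> (x \in Z) = (y \in Z).
Proof.
move=> /forallP H x y; apply: (@closed_connect _ e (mem Z)) => a b eab.
by have /forallP/(_ b)/implyP/(_ eab)/eqP := H a.
Qed.

Lemma card_closed : #|[set Z | clos Z]| = 2 ^ #|cls|.
Proof.
rewrite -card_powerset.
have -> : [set Z | clos Z] = [set cover P | P in powerset cls].
  apply/setP => Z; rewrite inE; apply/idP/imsetP => [HZ|[P PP ->]].
    exists [set c in cls | c \subset Z]; first by rewrite powersetE; apply/subsetP => c; rewrite inE => /andP[].
    apply/setP => x; apply/idP/bigcupP => [xZ|[c]].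
      exists (cl x); last by rewrite inE connect0.
      rewrite inE imset_f //=; apply/subsetP => y; rewrite inE => cxy.
      by rewrite -(clos_connect HZ cxy).
    by rewrite inE => /andP[_ /subsetP]; apply.
  apply/forallP => x; apply/forallP => y; apply/implyP => exy.
  have cxy : connect e x y by apply: connect1.
  rewrite powersetE in PP; move/subsetP: PP => PP.
  apply/eqP; apply/bigcupP/bigcupP => [][c cP].
    have /imsetP [z _ cz] := PP _ cP; subst c.
    rewrite /cl inE => zx; exists (cl z) => //; rewrite /cl inE; exact: connect_trans zx cxy.
  have /imsetP [z _ cz] := PP _ cP; subst c.
  rewrite /cl inE => zy; exists (cl z) => //; rewrite /cl inE; apply: connect_trans zy _.
  by rewrite esym.
apply: card_in_imset => P1 P2; rewrite !powersetE => /subsetP S1 /subsetP S2 Hc.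
have key : forall P1 P2 : {set {set T}}, {subset P1 <= cls} -> {subset P2 <= cls} -> cover P1 = cover P2 -> P1 \subset P2.
  move=> Q1 Q2 T1 T2 HQ; apply/subsetP => c cQ1.
  have /imsetP [x _ cx] := T1 _ cQ1.
  have : x \in cover Q1 by apply/bigcupP; exists c; rewrite // cx inE connect0.
  rewrite HQ => /bigcupP [c' c'Q2 xc']; have /imsetP [x' _ c'x'] := T2 _ c'Q2.
  move: xc'; rewrite c'x' /cl inE => cx'x.
  by rewrite cx -(cl_eq cx'x) -c'x'.
by apply/eqP; rewrite eqEsubset !key.
Qed.
End CardClosed.


Section Count.
Variable B : bouquet.
Local Notation m := (bm B).
Local Notation n := (bm B).*2.
Local Notation pos := 'I_n.
Variable y : {set 'I_m}.

Definition cnt (k : nat) := #|[set j : pos | (j < k) && (bw j \in y)]|.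

Lemma cnt_split k k' : k <= k' ->
  cnt k' = cnt k + #|[set j : pos | (k <= j < k') && (bw j \in y)]|.
Proof.
move=> kk'; rewrite /cnt -(cardsID [set j : pos | j < k] [set j : pos | (j < k') && (bw j \in y)]).
congr (_ + _); apply: eq_card => j; rewrite !inE.
  by case: (ltnP j k) => jk; case: (ltnP j k') => jk' //=; rewrite ?andbF //; lia.
by case: (ltnP j k) => jk; case: (ltnP j k') => jk' //=; lia.
Qed.

Lemma cntS (i : pos) : cnt i.+1 = cnt i + (bw i \in y).
Proof.
rewrite (cnt_split (leqnSn i)); congr (_ + _).
case: (boolP (bw i \in y)) => H.
  rewrite /= -(cards1 i); apply: eq_card => j; rewrite !inE.
  case: (eqVneq j i) => [->|ji]; first by rewrite leqnn ltnSn H.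
  have : (j : nat) != i by [].
  by case: (ltnP i j) => a; case: (ltnP j i.+1) => b //=; lia.
apply/eqP; rewrite /= cards_eq0; apply/eqP/setP => j; rewrite !inE.
case: (eqVneq j i) => [->|ji]; first by rewrite (negbTE H) andbF.
have : (j : nat) != i by [].
by case: (ltnP i j) => a; case: (ltnP j i.+1) => b //=; lia.
Qed.

Lemma cnt0 : cnt 0 = 0.
Proof. by apply/eqP; rewrite cards_eq0; apply/eqP/setP => j; rewrite !inE. Qed.

Lemma card_part (P : pred pos) :
  #|[set j | P j && (bw j \in y)]| = \sum_(f in y) #|[set j | P j && (bw j == f)]|.
Proof.
rewrite -sum1dep_card (partition_big (fun j : pos => bw j) (mem y)) /=; last by move=> j /andP[].
apply: eq_bigr => f fy; rewrite -sum1dep_card; apply: eq_bigl => j.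
by case: (eqVneq (bw j) f) => [->|]; rewrite ?fy ?andbT ?andbF.
Qed.

Lemma cnt_n : odd (cnt n) = false.
Proof.
have -> : cnt n = #|[set j : pos | true && (bw j \in y)]|.
  by rewrite /cnt; apply: eq_card => j; rewrite !inE ltn_ord.
rewrite card_part (eq_bigr (fun _ => 2)); last first.
  by move=> f _; rewrite -(bwP f); apply: eq_card => j; rewrite !inE.
by rewrite sum_nat_const oddM andbF.
Qed.
End Count.


Section Inter.
Variable B : bouquet.
Local Notation m := (bm B).
Local Notation n := (bm B).*2.
Local Notation pos := 'I_n.

Lemma card_two (Q : pred pos) (r t : pos) : r != t ->
  #|[set j | Q j && ((j == r) || (j == t))]| = Q r + Q t.
Proof.
move=> rt.
case Qr: (Q r); case Qt: (Q t).
- have -> : true + true = #|[set r; t]| by rewrite cards2 rt.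
   apply: eq_card => j; rewrite !inE.
  have tr : t != r by rewrite eq_sym.
  by case: (eqVneq j r) => [->|jr]; last case: (eqVneq j t) => [->|jt]; rewrite ?eqxx ?orbT ?Qr ?Qt ?(negbTE jr) ?(negbTE jt) ?(negbTE rt) ?(negbTE tr) /= ?andbF ?andbT.
- have -> : true + false = #|[set r]| by rewrite cards1.
   apply: eq_card => j; rewrite !inE.
  have tr : t != r by rewrite eq_sym.
  by case: (eqVneq j r) => [->|jr]; last case: (eqVneq j t) => [->|jt]; rewrite ?eqxx ?orbT ?Qr ?Qt ?(negbTE jr) ?(negbTE jt) ?(negbTE rt) ?(negbTE tr) /= ?andbF ?andbT.
- have -> : false + true = #|[set t]| by rewrite cards1.
   apply: eq_card => j; rewrite !inE.
  have tr : t != r by rewrite eq_sym.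
  by case: (eqVneq j r) => [->|jr]; last case: (eqVneq j t) => [->|jt]; rewrite ?eqxx ?orbT ?Qr ?Qt ?(negbTE jr) ?(negbTE jt) ?(negbTE rt) ?(negbTE tr) /= ?andbF ?andbT.
- apply/eqP; rewrite /= cards_eq0; apply/eqP/setP => j; rewrite !inE.
  have tr : t != r by rewrite eq_sym.
  by case: (eqVneq j r) => [->|jr]; last case: (eqVneq j t) => [->|jt]; rewrite ?eqxx ?orbT ?Qr ?Qt ?(negbTE jr) ?(negbTE jt) ?(negbTE rt) ?(negbTE tr) /= ?andbF ?andbT.
Qed.

Lemma iodd (p : pos) (f : 'I_m) : bw p != f -> p < other_end p ->
  odd #|[set j : pos | (p < j < other_end p) && (bw j == f)]| = interlaced (bw p) f.
Proof.
move=> ef pq.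
have [r rf] := pos_exists f.
set q := other_end p in pq *; set t := other_end r.
have rt : r != t by rewrite eq_sym oe_neq.
have -> : [set j : pos | (p < j < q) && (bw j == f)] =
          [set j : pos | (p < j < q) && ((j == r) || (j == t))].
  by apply/setP => j; rewrite !inE -rf bw_eq.
rewrite card_two //.
have bq : bw q = bw p by rewrite oe_bw.
have bt : bw t = f by rewrite oe_bw.
have ne : forall a b : pos, bw a != bw b -> (a : nat) != b.
  by move=> a b; apply: contra => /eqP/val_inj ->.
have npr : (p : nat) != r by apply: ne; rewrite rf.
have npt : (p : nat) != t by apply: ne; rewrite bt.
have nqr : (q : nat) != r by apply: ne; rewrite rf bq.
have nqt : (q : nat) != t by apply: ne; rewrite bt bq.
have nrt : (r : nat) != t by [].
have Ee : forall a : pos, (bw a == bw p) = (a == p) || (a == q) by move=> a; rewrite bw_eq.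
have Ef : forall a : pos, (bw a == f) = (a == r) || (a == t) by move=> a; rewrite -rf bw_eq.
rewrite /interlaced ef /=.
apply/idP/idP.
- move=> H.
  have [[Qr nQt]|[Qt nQr]] : ((p < r < q) /\ ~~ (p < t < q)) \/ ((p < t < q) /\ ~~ (p < r < q)).
    by move: H; case: (p < r < q); case: (p < t < q); auto.
  + case: (ltnP t p) => H1.
      apply/existsP; exists t; apply/existsP; exists p; apply/existsP; exists r; apply/existsP; exists q.
      rewrite rf bt bq !eqxx orbT andbT; lia.
    apply/existsP; exists p; apply/existsP; exists r; apply/existsP; exists q; apply/existsP; exists t.
    rewrite rf bt bq !eqxx /= andbT; lia.
  + case: (ltnP r p) => H1.
      apply/existsP; exists r; apply/existsP; exists p; apply/existsP; exists t; apply/existsP; exists q.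
      rewrite rf bt bq !eqxx orbT andbT; lia.
    apply/existsP; exists p; apply/existsP; exists t; apply/existsP; exists q; apply/existsP; exists r.
    rewrite rf bt bq !eqxx /= andbT; lia.
- case/existsP => i; case/existsP => j; case/existsP => k; case/existsP => l.
  case/and4P => ij jk kl /orP[|] /and4P [/eqP Hi /eqP Hj /eqP Hk /eqP Hl].
  + have Ee' : forall a : pos, bw a = bw p -> a = p \/ a = q.
      by move=> a Ha; move: (Ee a); rewrite Ha eqxx => /esym/orP[]/eqP; auto.
    have Ef' : forall a : pos, bw a = f -> a = r \/ a = t.
      by move=> a Ha; move: (Ef a); rewrite Ha eqxx => /esym/orP[]/eqP; auto.
    case: (Ee' _ Hi) => ?; case: (Ee' _ Hk) => ?; case: (Ef' _ Hj) => ?; case: (Ef' _ Hl) => ?; subst;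
    by case: (ltnP p r) => a; case: (ltnP r q) => b; case: (ltnP p t) => c; case: (ltnP t q) => d //=; lia.
  + have Ee' : forall a : pos, bw a = bw p -> a = p \/ a = q.
      by move=> a Ha; move: (Ee a); rewrite Ha eqxx => /esym/orP[]/eqP; auto.
    have Ef' : forall a : pos, bw a = f -> a = r \/ a = t.
      by move=> a Ha; move: (Ef a); rewrite Ha eqxx => /esym/orP[]/eqP; auto.
    case: (Ef' _ Hi) => ?; case: (Ef' _ Hk) => ?; case: (Ee' _ Hj) => ?; case: (Ee' _ Hl) => ?; subst;
    by case: (ltnP p r) => a; case: (ltnP r q) => b; case: (ltnP p t) => c; case: (ltnP t q) => d //=; lia.
Qed.
End Inter.


Section Core.
Variable B : bouquet.
Local Notation m := (bm B).
Local Notation n := (bm B).*2.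
Local Notation pos := 'I_n.
Variable bb : 'I_m -> bool * bool.
Hypothesis Hbb : forall e, bb e != (false, false).

Definition sfun (x : bflag B) := kapp (bb (bw x.1)) x.

Definition h (y : {set 'I_m}) (x : bflag B) :=
  odd (cnt y x.1) (+) (x.2 && (bw x.1 \in y)).

Definition Dset := [set e | (bb e).1].

Definition kforall (y : {set 'I_m}) :=
  [forall e, (bb e).1 ==> ~~ odd (#|[set f in y | interlaced e f]| + ((e \in y) && ((bb e).2 == bor e)))].
Definition kcond (y : {set 'I_m}) := (y \subset Dset) && kforall y.

Lemma btw (y : {set 'I_m}) (p : pos) : p < other_end p ->
  odd #|[set j : pos | (p < j < other_end p) && (bw j \in y)]| =
  odd #|[set f in y | interlaced (bw p) f]|.
Proof.
move=> pq; rewrite (card_part y (fun j : pos => p < j < other_end p)).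
have -> : #|[set f in y | interlaced (bw p) f]| = \sum_(f in y) (interlaced (bw p) f : nat).
  rewrite -sum1dep_card big_mkcondr /=; apply: eq_bigr => f _.
  by case: (interlaced _ _).
apply: (big_ind2 (fun a b => odd a = odd b)) => //.
  by move=> a b c d H1 H2; rewrite !oddD H1 H2.
move=> f _; case: (eqVneq (bw p) f) => [<-|ef]; last by rewrite iodd // oddb.
rewrite /interlaced eqxx /=.
have -> : [set j : pos | (p < j < other_end p) && (bw j == bw p)] = set0.
  apply/setP => j; rewrite !inE bw_eq.
  by case: (eqVneq j p) => [->|_]; [rewrite ltnn | case: (eqVneq j (other_end p)) => [->|_]; rewrite ?ltnn ?andbF].
by rewrite cards0.
Qed.

Lemma key (y : {set 'I_m}) (p : pos) : p < other_end p -> (bb (bw p)).1 ->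
  let s := (bb (bw p)).2 (+) bor (bw p) in
  (h y (other_end p, s) == h y (p, false)) && (h y (other_end p, ~~ s) == h y (p, true)) =
  ~~ odd (#|[set f in y | interlaced (bw p) f]| + ((bw p \in y) && ((bb (bw p)).2 == bor (bw p)))).
Proof.
move=> pq _ s; rewrite /h /= oe_bw.
rewrite (cnt_split y (pq : p.+1 <= other_end p)) cntS !oddD.
rewrite btw // /s.
case: (odd (cnt y p)); case: (bw p \in y); case: (odd #|_|); case: (bb (bw p)).2; case: (bor (bw p)) => //.
Qed.

Lemma sfun_T (i : pos) b : (bb (bw i)).1 ->
  sfun (i, b) = (other_end i, b (+) ((bb (bw i)).2 (+) bor (bw i))).
Proof. by rewrite /sfun /kapp /kap /=; case: (bb (bw i)) => [[] v] //= _; rewrite addbA. Qed.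

Lemma sfun_F (i : pos) b : ~~ (bb (bw i)).1 -> sfun (i, b) = (i, ~~ b).
Proof.
move: (Hbb (bw i)); rewrite /sfun /kapp /kap /=.
by case: (bb (bw i)) => [[] []] //= _ _; rewrite addbT addbF.
Qed.

Lemma sfunK x : sfun (sfun x) = x.
Proof. by rewrite /sfun /kapp kap_bw kapK !addbb kap00. Qed.

Lemma h_t1 y (x : bflag B) : h y (bt1 x) = h y x.
Proof.
have Ht : forall i : pos, h y (bt1 (i, true)) = h y (i, true).
  move=> i; rewrite /h /bt1 /= addbF.
  have := ltn_ord i; rewrite leq_eqVlt => /orP[/eqP Hi|Hi].
    have -> : (i.+1 %% n) = 0 by rewrite Hi modnn.
    by rewrite cnt0 -[bw i \in y]oddb -oddD -cntS Hi cnt_n.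
  by rewrite modn_small // cntS oddD oddb.
case: x => i [] //.
have -> : h y (i, false) = h y (bt1 (bt1 (i, false))) by rewrite bt1K.
by rewrite /= Ht.
Qed.

Lemma key' y (i : pos) : (bb (bw i)).1 ->
  let s := (bb (bw i)).2 (+) bor (bw i) in
  (h y (other_end i, s) == h y (i, false)) && (h y (other_end i, ~~ s) == h y (i, true)) =
  ~~ odd (#|[set f in y | interlaced (bw i) f]| + ((bw i \in y) && ((bb (bw i)).2 == bor (bw i)))).
Proof.
move=> Hi s.
case: (ltnP i (other_end i)) => lt; first exact: key.
have lt' : other_end i < other_end (other_end i).
  rewrite oeK ltn_neqAle lt andbT; apply/negP => /eqP/val_inj H.
  by move: (oe_neq i); rewrite H eqxx.
have := key y lt'; rewrite oeK oe_bw => /(_ Hi) <-.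
rewrite /s; case: (_ (+) _) => /=;
  by case: (h y (i, false)); case: (h y (i, true)); case: (h y (other_end i, false)); case: (h y (other_end i, true)).
Qed.

Definition closZ (Z : {set bflag B}) :=
  [forall x, ((bt1 x \in Z) == (x \in Z)) && ((sfun x \in Z) == (x \in Z))].
Definition Hs (y : {set 'I_m}) (beta : bool) := [set x | h y x (+) beta].

Lemma clos_Hs (y : {set 'I_m}) beta : y \subset Dset -> closZ (Hs y beta) = kforall y.
Proof.
move=> /subsetP yD.
have E : forall a b : bool, (a (+) beta == b (+) beta) = (a == b) by case; case; case: beta.
apply/forallP/forallP => [H e|H [i b]].
  apply/implyP => He.
  have [i Hi] := pos_exists e; subst e.
  rewrite -key' //.
  have /andP[_ H0] := H (i, false); have /andP[_ H1] := H (i, true).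
  move: H0 H1; rewrite !inE !E !sfun_T //= => /eqP -> /eqP ->.
  by rewrite !eqxx.
rewrite !inE !E h_t1 eqxx /=.
case: (boolP (bb (bw i)).1) => Hi; last first.
  have ny : bw i \notin y by apply/negP => /yD; rewrite inE (negbTE Hi).
  by rewrite sfun_F // /h /= (negbTE ny) !andbF.
have := H (bw i); rewrite Hi /= -key' // => /andP[/eqP H0 /eqP H1].
by rewrite sfun_T //; case: b; rewrite /= ?addFb ?addTb ?H0 ?H1.
Qed.

Definition xZ (Z : {set bflag B}) : {set 'I_m} :=
  [set e | (bb e).1 && [exists i : pos, (bw i == e) && (((i, false) \in Z) != ((i, true) \in Z))]].

Lemma closZP Z : closZ Z -> forall x, (bt1 x \in Z) = (x \in Z) /\ (sfun x \in Z) = (x \in Z).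
Proof. by move=> /forallP H x; have /andP[/eqP -> /eqP ->] := H x. Qed.

Lemma WS Z : closZ Z -> forall i : pos,
  ((i, true) \in Z) = ((i, false) \in Z) (+) (bw i \in xZ Z).
Proof.
move=> /closZP H i; rewrite inE.
case: (boolP (bb (bw i)).1) => Hi /=; last first.
  by have [_] := H (i, false); rewrite sfun_F // addbF => ->.
have dif : forall j : pos, bw j == bw i ->
   (((j, false) \in Z) != ((j, true) \in Z)) = (((i, false) \in Z) != ((i, true) \in Z)).
  move=> j; rewrite bw_eq => /orP[/eqP->//|/eqP->].
  have [_ E0] := H (i, false); have [_ E1] := H (i, true).
  move: E0 E1; rewrite !sfun_T //=.
  by case: (_ (+) _) => /= -> ->; rewrite // eq_sym.
have -> : [exists j : pos, (bw j == bw i) && (((j, false) \in Z) != ((j, true) \in Z))] =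
          (((i, false) \in Z) != ((i, true) \in Z)).
  apply/existsP/idP => [[j /andP[bj]]|Hd]; first by rewrite dif.
  by exists i; rewrite eqxx.
by case: ((i, false) \in Z); case: ((i, true) \in Z).
Qed.

Lemma C2 (n0 : 0 < n) Z : closZ Z -> Z = Hs (xZ Z) ((Ordinal n0, false) \in Z).
Proof.
move=> HZ; have [Ht1 _] := (closZP HZ (Ordinal n0, false)).
set beta := _ \in Z.
have step : forall k (Hk : k < n),
   (((Ordinal Hk, false) \in Z) = h (xZ Z) (Ordinal Hk, false) (+) beta) /\
   (((Ordinal Hk, true) \in Z) = h (xZ Z) (Ordinal Hk, true) (+) beta).
  have WSh : forall i : pos, ((i, false) \in Z) = h (xZ Z) (i, false) (+) beta ->
      ((i, true) \in Z) = h (xZ Z) (i, true) (+) beta.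
    move=> i E; rewrite (WS HZ) E /h /= addbF.
    by rewrite addbAC.
  elim => [|k IH] Hk.
    have E : (Ordinal Hk, false) \in Z = h (xZ Z) (Ordinal Hk, false) (+) beta.
      rewrite /h /= cnt0 /beta; congr (_ \in Z); congr (_, _); exact: val_inj.
    by split => //; apply: WSh.
  have Hk' : k < n by apply: ltnW.
  have [_ IHt] := IH Hk'.
  have E : (Ordinal Hk, false) \in Z = h (xZ Z) (Ordinal Hk, false) (+) beta.
    have Eb : bt1 (Ordinal Hk', true) = (Ordinal Hk, false).
      rewrite /bt1 /=; congr (_, _); apply: val_inj; rewrite /= modn_small //.
    have [T1 _] := closZP HZ (Ordinal Hk', true).
    by rewrite -Eb T1 IHt h_t1.
  by split => //; apply: WSh.
apply/setP => -[i b]; rewrite inE.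
have [E0 E1] := step i (ltn_ord i).
have Hi : Ordinal (ltn_ord i) = i by apply: val_inj.
rewrite Hi in E0 E1.
by case: b; rewrite ?E0 ?E1.
Qed.

Lemma C4 (y : {set 'I_m}) beta : y \subset Dset -> xZ (Hs y beta) = y.
Proof.
move=> /subsetP yD; apply/setP => e; rewrite !inE.
have -> : [exists i : pos, (bw i == e) && (((i, false) \in Hs y beta) != ((i, true) \in Hs y beta))] =
          (e \in y).
  apply/existsP/idP => [[i /andP[/eqP <-]]|ey].
    by rewrite !inE /h /= addbF; case: (odd _); case: (_ \in y); case: beta.
  have [i Hi] := pos_exists e; exists i; rewrite Hi eqxx /= !inE /h /= Hi ey ?addbF.
  by case: (odd _); case: beta.
by case: (boolP (e \in y)) => [/yD|]; rewrite ?inE ?andbF // => ->.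
Qed.

Lemma count_closed (n0 : 0 < n) :
  #|[set Z | closZ Z]| = 2 * #|[set y | kcond y]|.
Proof.
have -> : [set Z | closZ Z] =
    [set Hs p.1 p.2 | p in setX [set y | kcond y] [set: bool]].
  apply/setP => Z; rewrite inE; apply/idP/imsetP => [HZ|[[y b]]].
    exists (xZ Z, (Ordinal n0, false) \in Z); last exact: C2.
    rewrite !inE andbT /kcond.
    have sD : xZ Z \subset Dset by apply/subsetP => e; rewrite !inE => /andP[].
    by rewrite sD -(clos_Hs ((Ordinal n0, false) \in Z) sD) -C2.
  by rewrite !inE andbT => /andP[yD ky] ->; rewrite clos_Hs.
rewrite card_in_imset.
  by rewrite cardsX cardsT card_bool mulnC.
move=> [y b] [y' b']; rewrite !inE !andbT => /andP[yD _] /andP[y'D _] /= E.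
move: yD y'D E => /= yD y'D E.
have Ey : y = y' by rewrite -(C4 b yD) -(C4 b' y'D); move: E => /= ->.
have Eb : b = b'.
  have : (Ordinal n0, false) \in Hs y b = ((Ordinal n0, false) \in Hs y' b') by rewrite E.
  by rewrite !inE /h /= !cnt0 /=.
by rewrite Ey Eb.
Qed.
End Core.


Lemma orbits_count (Bq : bouquet) (bb : 'I_(bm Bq) -> bool * bool)
  (Hbb : forall e, bb e != (false, false)) (g : gem (bflag Bq))
  (H1 : forall x, g1 g x = bt1 x) (H2 : forall x, g2 g x = sfun bb x)
  (n0 : 0 < (bm Bq).*2) :
  2 ^ gem_orbits g = 2 * #|[set y | kcond bb y]|.
Proof.
rewrite -(count_closed Hbb n0).
have esym : connect_sym (vrel g).
  apply: sym_connect_sym => x y; rewrite /vrel /= !H1 !H2.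
  have E1 : (y == bt1 x) = (x == bt1 y) by apply/eqP/eqP => ->; rewrite bt1K.
  have E2 : (y == sfun bb x) = (x == sfun bb y) by apply/eqP/eqP => ->; rewrite sfunK.
  by rewrite E1 E2.
rewrite /gem_orbits -(card_closed esym); apply: eq_card => Z; rewrite !inE.
apply/forallP/forallP => H x.
  have Hb := H x; have /forallP/(_ (bt1 x))/implyP := Hb.
  rewrite /vrel /= H1 eqxx => /(_ isT) /eqP E1.
  have /forallP/(_ (sfun bb x))/implyP := Hb.
  by rewrite /vrel /= H2 eqxx orbT => /(_ isT) /eqP E2; rewrite -E1 -E2 !eqxx.
apply/forallP => y; apply/implyP; rewrite /vrel /= H1 H2.
by have /andP[/eqP E1 /eqP E2] := H x; case/orP => /eqP ->; rewrite ?E1 ?E2.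
Qed.

Definition fstate (Bq : bouquet) (l : seq (seq rop * {set 'I_(bm Bq)})) (e : 'I_(bm Bq)) :=
  st_seq [seq (p.1, e \in p.2) | p : seq rop * {set 'I_(bm Bq)} <- l] st_init.

Lemma core_nverts (Bq : bouquet) (l : seq (seq rop * {set 'I_(bm Bq)})) :
  0 < bm Bq ->
  2 ^ nverts (app_seq (@bedge Bq) l (bgem Bq)) =
  2 * #|[set y | kcond (fun e => (fstate l e).2) y]|.
Proof.
move=> m0; rewrite /nverts; have -> : (bm Bq == 0) = false by rewrite lt0n in m0; apply/negbTE.
have R := rep_seq l (@rep_init Bq).
apply: orbits_count.
- move=> e; have := good_seq [seq (p.1, e \in p.2) | p : seq rop * {set 'I_(bm Bq)} <- l] (s := st_init) isT.
  by case/and3P.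
- by move=> x; have [] := R x.
- by move=> x; have [_ _ ->] := R x.
- by rewrite double_gt0.
Qed.

Section Transport.
Variables B1 B2 : bouquet.
Variable phi : 'I_(bm B1) -> 'I_(bm B2).
Variable psi : 'I_(bm B2) -> 'I_(bm B1).
Hypothesis phiK : cancel phi psi.
Hypothesis psiK : cancel psi phi.
Hypothesis Hor : forall e, bor (phi e) = bor e.
Hypothesis Hint : forall e f, interlaced (phi e) (phi f) = interlaced e f.

Lemma phi_inj : injective phi. Proof. exact: can_inj phiK. Qed.

Lemma kcond_phi bb1 bb2 (Hb : forall e, bb2 (phi e) = bb1 e) (y : {set 'I_(bm B1)}) :
  kcond bb2 (phi @: y) = kcond bb1 y.
Proof.
rewrite /kcond; congr andb.
  apply/subsetP/subsetP => H e.
    by move=> ey; have := H (phi e); rewrite mem_imset; last exact: phi_inj; rewrite !inE Hb => /(_ ey).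
  by case/imsetP => f fy ->; rewrite inE Hb; have := H f fy; rewrite inE.
apply/forallP/forallP => H e.
  have := H (phi e); rewrite Hb mem_imset; last exact: phi_inj.
  have -> : [set f in phi @: y | interlaced (phi e) f] = phi @: [set f in y | interlaced e f].
    apply/setP => f2; rewrite -(psiK f2) !inE !mem_imset; try exact: phi_inj.
    by rewrite !inE Hint.
  by rewrite card_imset ?Hor //; exact: phi_inj.
rewrite -(psiK e); have := H (psi e); rewrite -Hb mem_imset; last exact: phi_inj.
have -> : [set f in phi @: y | interlaced (phi (psi e)) f] = phi @: [set f in y | interlaced (psi e) f].
  apply/setP => f2; rewrite -(psiK f2) !inE !mem_imset; try exact: phi_inj.
  by rewrite !inE Hint.
by rewrite card_imset ?Hor //; exact: phi_inj.
Qed.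

Lemma kcount_phi bb1 bb2 (Hb : forall e, bb2 (phi e) = bb1 e) :
  #|[set y | kcond bb2 y]| = #|[set y | kcond bb1 y]|.
Proof.
rewrite -(card_imset _ (imset_inj phi_inj)); apply: eq_card => y2.
rewrite inE; apply/idP/imsetP => [H|[y1 + ->]].
  exists (psi @: y2); first by rewrite inE -(@kcond_phi bb1 bb2 Hb) -imset_comp (eq_imset _ psiK) imset_id.
  by rewrite -imset_comp (eq_imset _ psiK) imset_id.
by rewrite inE (@kcond_phi bb1 bb2 Hb).
Qed.

Lemma m_eq0 : (bm B1 == 0) = (bm B2 == 0).
Proof.
case: (posnP (bm B1)) => [h1|h1]; case: (posnP (bm B2)) => [h2|h2] //.
  by exfalso; move: (psi (Ordinal h2)); rewrite h1; case.
by exfalso; move: (phi (Ordinal h1)); rewrite h2; case.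
Qed.

Lemma nverts_transport (l1 : seq (seq rop * {set 'I_(bm B1)})) (l2 : seq (seq rop * {set 'I_(bm B2)})) :
  (forall e, [seq (p.1, phi e \in p.2) | p : seq rop * {set 'I_(bm B2)} <- l2] =
             [seq (p.1, e \in p.2) | p : seq rop * {set 'I_(bm B1)} <- l1]) ->
  nverts (app_seq (@bedge B2) l2 (bgem B2)) = nverts (app_seq (@bedge B1) l1 (bgem B1)).
Proof.
move=> Hl.
case: (posnP (bm B1)) => h1.
  have h2 : bm B2 == 0 by rewrite -m_eq0 h1.
  rewrite /nverts h2; have -> : (bm B1 == 0) = true by apply/eqP.
  by [].
have h2 : 0 < bm B2 by rewrite lt0n -m_eq0 -lt0n.
apply/eqP; rewrite -(@eqn_exp2l 2) // core_nverts // core_nverts //.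
rewrite (@kcount_phi (fun e => (fstate l1 e).2)) //.
by move=> e; rewrite /fstate Hl.
Qed.
End Transport.

Unset Implicit Arguments.
Theorem mainTheorem8 (B1 B2 : bouquet) :
  SI_isomorphic B1 B2 ->
  [/\ P_d B1 = P_d B2, P_dt B1 = P_dt B2,
      P_tdt B1 = P_tdt B2 & P_d_t B1 = P_d_t B2].
Proof.
case=> phi [[psi phiK psiK] Hor Hint].
have T := nverts_transport phiK psiK Hor Hint.
have pinj := phi_inj phiK.
have setbij : bijective (fun A : {set 'I_(bm B1)} => phi @: A).
  apply: (@Bijective _ _ _ (fun A : {set 'I_(bm B2)} => psi @: A)) => A;
    rewrite -imset_comp -[RHS]imset_id; apply: eq_imset => x /=; by rewrite ?phiK ?psiK.
have ffbij : forall k, bijective (fun f : {ffun 'I_(bm B1) -> 'I_k} => [ffun x => f (psi x)]).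
  move=> k; apply: (@Bijective _ _ _ (fun f : {ffun 'I_(bm B2) -> 'I_k} => [ffun x => f (phi x)])) => f;
    by apply/ffunP => x; rewrite !ffunE ?phiK ?psiK.
have partE : forall k (f : {ffun 'I_(bm B1) -> 'I_k}) j e,
    (phi e \in part [ffun x => f (psi x)] j) = (e \in part f j).
  by move=> k f j e; rewrite /part !inE ffunE phiK.
split.
- rewrite /P_d [RHS](reindex _ (onW_bij _ setbij)); apply: eq_bigr => A _; congr ('X^ _)%R.
  symmetry; apply: (T [:: ([:: OpD], A)] [:: ([:: OpD], phi @: A)]).
  by move=> e /=; rewrite mem_imset.
- rewrite /P_dt [RHS](reindex _ (onW_bij _ (ffbij 3))); apply: eq_bigr => f _; congr ('X^ _)%R.
  symmetry; apply: T => e /=.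
  by rewrite !partE.
- rewrite /P_tdt [RHS](reindex _ (onW_bij _ setbij)); apply: eq_bigr => A _; congr ('X^ _)%R.
  symmetry; apply: (T [:: ([:: OpT; OpD; OpT], A)] [:: ([:: OpT; OpD; OpT], phi @: A)]).
  by move=> e /=; rewrite mem_imset.
- rewrite /P_d_t [RHS](reindex _ (onW_bij _ (ffbij 6))); apply: eq_bigr => f _; congr ('X^ _)%R.
  symmetry; apply: T => e /=.
  by rewrite !partE.
Qed.
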